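(* Fix $m\ge1$, $n\ge0$ and $i\in Ag$. Every labelled sequent derivable in $\mathsf{G3Ldm}_{n}^{m}+\mathsf{PR}$ is derivable in $\mathsf{G3Ldm}_{n}^{m}+\mathsf{PR}$ without any use of the rule $(\mathsf{refl}_i)$.
   Context: Language. $Ag=\{1,\dots,m\}$, $Var$ a countable set of propositional variables; formulas $\phi ::= p \mid \overline{p} \mid (\phi\wedge\phi) \mid (\phi\vee\phi) \mid \Box\phi \mid \Diamond\phi \mid [i]\phi \mid \langle i\rangle\phi$. Labelled sequents $\mathcal{R},\Gamma$: $\mathcal{R}$ a multiset of relational atoms $\mathcal{R}_ixy$, $\Gamma$ a multiset of labelled formulas $x:\phi$. Derivations are finite trees whose leaves are $(\mathsf{id})$ instances. Rules of $\mathsf{G3Ldm}_{n}^{m}$ (premise(s) / conclusion): $(\mathsf{id})$: / $\mathcal{R}, w:p, w:\overline{p},\Gamma$. $(\wedge)$: $\mathcal{R}, w:\phi\wedge\psi, w:\phi,\Gamma$ and $\mathcal{R}, w:\phi\wedge\psi, w:\psi,\Gamma$ / $\mathcal{R}, w:\phi\wedge\psi,\Gamma$. $(\vee)$: $\mathcal{R}, w:\phi\vee\psi, w:\phi, w:\psi,\Gamma$ / $\mathcal{R}, w:\phi\vee\psi,\Gamma$. $([i])$: $\mathcal{R},\mathcal{R}_iwv, v:\phi,\Gamma$ / $\mathcal{R}, w:[i]\phi,\Gamma$ ($v$ fresh). $(\Box)$: $\mathcal{R}, w:\Box\phi, v:\phi,\Gamma$ / $\mathcal{R}, w:\Box\phi,\Gamma$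 ($v$ fresh). $(\Diamond)$: $\mathcal{R}, w:\Diamond\phi, u:\phi,\Gamma$ / $\mathcal{R}, w:\Diamond\phi,\Gamma$. $(\mathsf{IOA})$: $\mathcal{R},\mathcal{R}_1u_1v,\dots,\mathcal{R}_mu_mv,\Gamma$ / $\mathcal{R},\Gamma$ ($v$ fresh). $(\langle i\rangle)$: $\mathcal{R},\mathcal{R}_iwu, w:\langle i\rangle\phi, u:\phi,\Gamma$ / $\mathcal{R},\mathcal{R}_iwu, w:\langle i\rangle\phi,\Gamma$. $(\mathsf{refl}_i)$: $\mathcal{R},\mathcal{R}_iww,\Gamma$ / $\mathcal{R},\Gamma$. $(\mathsf{eucl}_i)$: $\mathcal{R},\mathcal{R}_iwu,\mathcal{R}_iwv,\mathcal{R}_iuv,\Gamma$ / $\mathcal{R},\mathcal{R}_iwu,\mathcal{R}_iwv,\Gamma$. $(\mathsf{APC}^i_n)$ (only if $n>0$): premises $\mathcal{R},\mathcal{R}_iw_kw_j,\Gamma$ for all $0\le k\le n-1$, $k+1\le j\le n$ / $\mathcal{R},\Gamma$. ''Fresh'' means not occurring in the conclusion. One copy of the indexed rules for each agent. $\mathsf{G3Ldm}_{n}^{m}+\mathsf{PR}$ adds, for each $i\in Ag$, the propagation rule $(\mathsf{Pr}_i)$: $\mathcal{R}, w:\langle i\rangle\phi, u:\phi,\Gamma$ / $\mathcal{R}, w:\langle i\rangle\phi,\Gamma$, applicable only if $w=u$ or there are labels $w=z_0,\dots,z_k=u$ ($k\ge1$) with $\mathcal{R}_iz_lz_{l+1}\in\mathcal{R}$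 or $\mathcal{R}_iz_{l+1}z_l\in\mathcal{R}$ for each $l<k$. *)

(* Defs.v *)
From mathcomp Require Import all_boot.
From Stdlib Require Import List Permutation Relations.

Set Implicit Arguments.
Unset Strict Implicit.
Unset Printing Implicit Defensive.

(* Agents Ag = {1,...,m} are represented by 'I_m = {0,...,m-1}. *)
Definition agent (m : nat) := 'I_m.
Definition var := nat.
Definition label := nat.

Inductive form (m : nat) : Type :=
| Var   : var -> form m
| NVar  : var -> form m
| And   : form m -> form m -> form m
| Or    : form m -> form m -> form m
| Box   : form m -> form m
| Dia   : form m -> form m
| BoxA  : 'I_m -> form m -> form m
| DiaA  : 'I_m -> form m -> form m.

Definition ratom (m : nat) := ('I_m * label * label)%type.
Definition lform (m : nat) := (label * form m)%type.

(* A labelled sequent R, Gamma: two multisets, represented as lists taken up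
   to permutation (see rule d_perm). *)
Definition sequent (m : nat) := (list (ratom m) * list (lform m))%type.

Definition labels_R m (R : list (ratom m)) : list label :=
  flat_map (fun a : ratom m => let '(_, x, y) := a in [:: x; y]) R.
Definition labels_G m (G : list (lform m)) : list label :=
  map (fun a : lform m => a.1) G.
Definition fresh m (v : label) (R : list (ratom m)) (G : list (lform m)) : Prop :=
  ~ In v (labels_R R) /\ ~ In v (labels_G G).

(* Undirected R_i-step, and its reflexive-transitive closure: the side
   condition of (Pr_i): w = u or a chain w = z0,...,zk = u with R_i z_l z_{l+1}
   or R_i z_{l+1} z_l in R. *)
Definition istep m (i : 'I_m) (R : list (ratom m)) (x y : label) : Prop :=
  In (i, x, y) R \/ In (i, y, x) R.
Definition iconnected m (i : 'I_m) (R : list (ratom m)) : label -> label -> Prop :=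
  clos_refl_trans label (istep i R).

(* Derivability in G3Ldm^m_n + PR, where (refl_i) may only be used for agents
   i with [reflOK i = true]. *)
Inductive derivable (m n : nat) (reflOK : 'I_m -> bool) : sequent m -> Prop :=
| d_perm : forall R R' G G',
    Permutation R R' -> Permutation G G' ->
    derivable n reflOK (R, G) -> derivable n reflOK (R', G')
| d_id : forall R G w p,
    derivable n reflOK (R, (w, Var m p) :: (w, NVar m p) :: G)
| d_and : forall R G w A B,
    derivable n reflOK (R, (w, And A B) :: (w, A) :: G) ->
    derivable n reflOK (R, (w, And A B) :: (w, B) :: G) ->
    derivable n reflOK (R, (w, And A B) :: G)
| d_or : forall R G w A B,
    derivable n reflOK (R, (w, Or A B) :: (w, A) :: (w, B) :: G) ->
    derivable n reflOK (R, (w, Or A B) :: G)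
| d_boxA : forall R G w v (i : 'I_m) A,
    fresh v R ((w, BoxA i A) :: G) ->
    derivable n reflOK ((i, w, v) :: R, (v, A) :: G) ->
    derivable n reflOK (R, (w, BoxA i A) :: G)
| d_box : forall R G w v A,
    fresh v R ((w, Box A) :: G) ->
    derivable n reflOK (R, (w, Box A) :: (v, A) :: G) ->
    derivable n reflOK (R, (w, Box A) :: G)
| d_dia : forall R G w u A,
    derivable n reflOK (R, (w, Dia A) :: (u, A) :: G) ->
    derivable n reflOK (R, (w, Dia A) :: G)
| d_ioa : forall R G (u : 'I_m -> label) v,
    fresh v R G ->
    derivable n reflOK (map (fun j => (j, u j, v)) (enum 'I_m) ++ R, G) ->
    derivable n reflOK (R, G)
| d_diaA : forall R G (i : 'I_m) w u A,
    derivable n reflOK ((i, w, u) :: R, (w, DiaA i A) :: (u, A) :: G) ->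
    derivable n reflOK ((i, w, u) :: R, (w, DiaA i A) :: G)
| d_refl : forall R G (i : 'I_m) w,
    reflOK i ->
    derivable n reflOK ((i, w, w) :: R, G) ->
    derivable n reflOK (R, G)
| d_eucl : forall R G (i : 'I_m) w u v,
    derivable n reflOK ((i, w, u) :: (i, w, v) :: (i, u, v) :: R, G) ->
    derivable n reflOK ((i, w, u) :: (i, w, v) :: R, G)
| d_apc : forall R G (i : 'I_m) (ws : nat -> label),
    0 < n ->
    (forall k j, k < j -> j <= n ->
       derivable n reflOK ((i, ws k, ws j) :: R, G)) ->
    derivable n reflOK (R, G)
| d_pr : forall R G (i : 'I_m) w u A,
    iconnected i R w u ->
    derivable n reflOK (R, (w, DiaA i A) :: (u, A) :: G) ->
    derivable n reflOK (R, (w, DiaA i A) :: G).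

Definition derivable_full m n (s : sequent m) := derivable n (fun _ => true) s.
Definition derivable_no_refl m n (i : 'I_m) (s : sequent m) :=
  derivable n (fun j => j != i) s.

(* Main.v *)
From Stdlib Require Import List Permutation Relations.
Require Import Defs.
From mathcomp Require Import all_boot.
Set Implicit Arguments.

Section S.
Variable m : nat.
Variable i : 'I_m.

Definition Inv (R R' : list (ratom m)) :=
  (forall j x y, In (j,x,y) R ->
     (j = i -> iconnected i R' x y) /\ (j <> i -> In (j,x,y) R')) /\
  incl (labels_R R') (labels_R R).

Lemma labels_R_cons (a : ratom m) R :
  labels_R (a :: R) = ([:: a.1.2; a.2] ++ labels_R R)%list.
Proof. by case: a => [[j x] y]. Qed.

Lemma labels_R_app (L R : list (ratom m)) :
  labels_R (L ++ R)%list = (labels_R L ++ labels_R R)%list.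
Proof. by rewrite /labels_R flat_map_app. Qed.

Lemma labels_R_perm (R R' : list (ratom m)) :
  Permutation R R' -> incl (labels_R R) (labels_R R').
Proof.
  move=> HP x Hx. apply: Permutation_in Hx.
  by apply: Permutation_flat_map.
Qed.

Lemma ic_mono (j : 'I_m) (R R' : list (ratom m)) x y :
  (forall a b, istep j R a b -> iconnected j R' a b) ->
  iconnected j R x y -> iconnected j R' x y.
Proof.
  move=> H. elim=> [a b Hs| a | a b c _ IH1 _ IH2].
  - by apply: H.
  - by apply: rt_refl.
  - by apply: rt_trans IH1 IH2.
Qed.

Lemma ic_sub (j : 'I_m) (R R' : list (ratom m)) x y :
  incl R R' -> iconnected j R x y -> iconnected j R' x y.
Proof.
  move=> Hi. apply: ic_mono => a b [H|H]; apply: rt_step.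
  - by left; apply: Hi.
  - by right; apply: Hi.
Qed.

Lemma ic_sym (j : 'I_m) (R : list (ratom m)) x y :
  iconnected j R x y -> iconnected j R y x.
Proof.
  elim=> [a b Hs| a | a b c _ IH1 _ IH2].
  - apply: rt_step; case: Hs => H; [by right | by left].
  - by apply: rt_refl.
  - by apply: rt_trans IH2 IH1.
Qed.

Lemma Inv_cons (a : ratom m) R R' : Inv R R' -> Inv (a :: R) (a :: R').
Proof.
  case=> HI HL; split.
  - move=> j x y [E|Hin].
    + rewrite E; split=> Hj.
      * by subst j; apply: rt_step; left; left.
      * by left.
    + have [H1 H2] := HI _ _ _ Hin; split=> Hj.
      * apply: ic_sub (H1 Hj) => z Hz; by right.
      * by right; apply: H2.
  - rewrite !labels_R_cons => z Hz0; case: (in_app_or _ _ _ Hz0) => Hz; apply: in_or_app.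
    + by left.
    + by right; apply: HL.
Qed.

Lemma Inv_app L R R' : Inv R R' -> Inv (L ++ R)%list (L ++ R')%list.
Proof. elim: L => //= a L IH H. by apply: Inv_cons; apply: IH. Qed.

Lemma fresh_incl v (R R' : list (ratom m)) G :
  fresh v R G -> incl (labels_R R') (labels_R R) -> fresh v R' G.
Proof. by case=> H1 H2 Hi; split => // H; apply: H1; apply: Hi. Qed.

Lemma perm2 (a b : ratom m) R :
  In a R -> In b R -> a <> b -> exists rest, Permutation R (a :: b :: rest).
Proof.
  move=> Ha Hb Hab.
  case: (in_split _ _ Ha) => l1 [l2 E]; subst R.
  have Hb' : In b (l1 ++ l2)%list.
    case: (in_app_or _ _ _ Hb) => H; apply: in_or_app; first by left.
    case: H => H; first by subst; case: Hab.
    by right.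
  case: (in_split _ _ Hb') => k1 [k2 E].
  exists (k1 ++ k2)%list.
  apply: Permutation_trans; first by apply: Permutation_sym; apply: Permutation_middle.
  apply: perm_skip. rewrite E. apply: Permutation_sym; apply: Permutation_middle.
Qed.

End S.
Arguments labels_R_perm {m R R'}.
Arguments ic_mono {m j R R' x y}.
Arguments ic_sub {m j R R' x y}.
Arguments ic_sym {m j R x y}.
Arguments Inv_cons {m i a R R'}.
Arguments Inv_app {m i L R R'}.
Arguments fresh_incl {m v R R' G}.
Arguments perm2 {m a b R}.

Arguments Inv {m}.
Section T.
Variable m : nat.
Variable i : 'I_m.

Lemma Inv_perm_l (R1 R2 R' : list (ratom m)) :
  Permutation R1 R2 -> Inv i R1 R' -> Inv i R2 R'.
Proof.
  move=> HP [HI HL]; split.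
  - move=> j x y H; apply: HI; apply: Permutation_in H.
    by apply: Permutation_sym.
  - move=> z Hz; apply: labels_R_perm HP _ (HL _ Hz).
Qed.

Lemma Inv_perm_r (R R1 R2 : list (ratom m)) :
  Permutation R1 R2 -> Inv i R R1 -> Inv i R R2.
Proof.
  move=> HP [HI HL]; split.
  - move=> j x y H; have [H1 H2] := HI _ _ _ H; split=> Hj.
    + apply: ic_sub (H1 Hj) => z Hz; apply: Permutation_in HP Hz.
    + apply: Permutation_in HP (H2 Hj).
  - move=> z Hz; apply: HL; apply: labels_R_perm (Permutation_sym HP) _ Hz.
Qed.

Lemma incl_cons_labels (a : ratom m) X Y :
  incl X (labels_R Y) -> incl X (labels_R (a :: Y)).
Proof.
  move=> H z Hz; rewrite labels_R_cons; apply: in_or_app; right; exact: H.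
Qed.

Arguments incl_cons_labels a {X Y}.
Arguments Inv_perm_l {R1 R2 R'}.
Arguments Inv_perm_r {R R1 R2}.

Lemma main n s : derivable n (fun _ => true) s ->
  forall R', Inv i s.1 R' -> derivable n (fun j => j != i) (R', s.2).
Proof.
  elim=> {s} /=.
  -
    move=> R R0 G G' HR HG _ IH R' HInv.
    apply: (d_perm (Permutation_refl _) HG); apply: IH.
    apply: Inv_perm_l HInv; exact: Permutation_sym.
  - move=> R G w p R' _; exact: d_id.
  - move=> R G w A B _ IH1 _ IH2 R' HInv.
    apply: d_and; [exact: IH1 | exact: IH2].
  - move=> R G w A B _ IH R' HInv.
    apply: d_or; exact: IH.
  - move=> R G w v i0 A Hf _ IH R' HInv.
    apply: (d_boxA (v:=v)); first exact: fresh_incl Hf HInv.2.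
    apply: IH; exact: Inv_cons.
  - move=> R G w v A Hf _ IH R' HInv.
    apply: (d_box (v:=v)); first exact: fresh_incl Hf HInv.2.
    exact: IH.
  - move=> R G w u A _ IH R' HInv.
    apply: (d_dia (u:=u)); exact: IH.
  - move=> R G u v Hf _ IH R' HInv.
    apply: (d_ioa (u:=u) (v:=v)); first exact: fresh_incl Hf HInv.2.
    apply: IH; exact: Inv_app.
  - move=> R G i0 w u A _ IH R' [HI HL].
    apply: (d_pr (u:=u)); last exact: IH.
    have Hin : In (i0, w, u) ((i0, w, u) :: R) by left.
    have [H1 H2] := HI _ _ _ Hin.
    case: (i0 =P i) => E; first by subst i0; exact: H1.
    apply: rt_step; left; exact: H2.
  - move=> R G j w _ _ IH R' [HI HL].
    case: (j =P i) => E.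
    + apply: IH; split; last exact: incl_cons_labels HL.
      move=> j0 x y [Eq|Hin].
      * case: Eq => <- <- <-; split=> Hj; first exact: rt_refl.
        by case: Hj.
      * exact: HI.
    + apply: (d_refl (i:=j) (w:=w)); first by apply/eqP.
      apply: IH; exact: Inv_cons.
  - move=> R G j w u v _ IH R' [HI HL].
    have Hwu : In (j, w, u) ((j, w, u) :: (j, w, v) :: R) by left.
    have Hwv : In (j, w, v) ((j, w, u) :: (j, w, v) :: R) by right; left.
    case: (j =P i) => E.
    + apply: IH; split; last first.
        move=> z Hz.
        have HP : Permutation ((j,u,v)::(j,w,u)::(j,w,v)::R) ((j,w,u)::(j,w,v)::(j,u,v)::R).
          apply: Permutation_trans (Permutation.perm_swap _ _ _) _.
          apply: Permutation.perm_skip; apply: Permutation.perm_swap.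
        exact: (labels_R_perm HP _ (incl_cons_labels (j, u, v) HL _ Hz)).
      move=> j0 x y [Eq|[Eq|[Eq|Hin]]].
      * apply: HI; rewrite Eq; by left.
      * apply: HI; rewrite Eq; by right; left.
      * case: Eq => <- <- <-; split=> Hj; last by [].
        exact: (@rt_trans _ _ u w v (ic_sym ((HI _ _ _ Hwu).1 E)) ((HI _ _ _ Hwv).1 E)).
      * apply: HI; by right; right.
    + have Iwu := (HI _ _ _ Hwu).2 E.
      have Iwv := (HI _ _ _ Hwv).2 E.
      case: (u =P v) => Euv.
      * subst v.
        apply: (d_refl (i:=j) (w:=u)); first by apply/eqP.
        apply: IH.
        have H0 : Inv i ((j, u, u) :: (j, w, u) :: (j, w, u) :: R) ((j, u, u) :: R').
          exact: Inv_cons.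
        apply: Inv_perm_l H0.
        apply: Permutation_trans (Permutation.perm_swap _ _ _) _.
        apply: Permutation.perm_skip; apply: Permutation.perm_swap.
      * have Hne : (j, w, u) <> (j, w, v) by case.
        case: (perm2 Iwu Iwv Hne) => rest HP.
        apply: (d_perm (Permutation_sym HP) (Permutation_refl _)).
        apply: d_eucl; apply: IH.
        have H0 : Inv i ((j, u, v) :: (j, w, u) :: (j, w, v) :: R) ((j, u, v) :: R').
          exact: Inv_cons.
        apply: Inv_perm_r; last apply: Inv_perm_l H0.
        -- apply: Permutation_trans (Permutation.perm_skip _ HP) _.
           apply: Permutation_trans (Permutation.perm_swap _ _ _) _.
           apply: Permutation.perm_skip; apply: Permutation.perm_swap.
        -- apply: Permutation_trans (Permutation.perm_swap _ _ _) _.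
           apply: Permutation.perm_skip; apply: Permutation.perm_swap.
  - move=> R G j ws Hn _ IH R' HInv.
    apply: (d_apc (i:=j) (ws:=ws)) => // k l Hk Hl.
    apply: (IH k l Hk Hl); exact: Inv_cons HInv.
  - move=> R G j w u A Hc _ IH R' [HI HL].
    apply: (d_pr (u:=u)); last by apply: IH.
    apply: ic_mono Hc => a b Hs.
    have key : forall x y, In (j, x, y) R -> iconnected j R' x y.
      move=> x y Hin; have [H1 H2] := HI _ _ _ Hin.
      case: (j =P i) => E; first by subst j; exact: H1.
      apply: rt_step; left; exact: H2.
    case: Hs => Hin; first exact: key.
    apply: ic_sym; exact: key.
Qed.

End T.

Theorem lemma2 (m n : nat) (i : 'I_m) (s : sequent m) :
  1 <= m -> derivable_full n s -> derivable_no_refl n i s.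
Proof.
  move=> _ H; case: s H => R G H.
  apply: (main H); split; last by [].
  move=> j x y Hin; split=> Hj; last by [].
  subst j; apply: rt_step; by left.
Qed.
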